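(* Let $p_\theta$ be a language model over $\Sigma$ depending differentiably on $\theta\in\mathbb{R}^d$ and $q$ a fixed language model over $\Sigma$ with $\mathrm{KL}(p_\theta\|q)<\infty$. Let $Y^{(1)},\dots,Y^{(M)}$ be i.i.d. samples from $p_\theta$ with eos-padded versions $\bar Y^{(m)}$. Define $$\widehat{\nabla}_{\mathrm{MC}}^{\le N}=\sum_{n=1}^N\frac1M\sum_{m=1}^M\log\frac{\overrightarrow{p}_\theta(\bar Y^{(m)}_n\mid\bar Y^{(m)}_{<n})}{\overrightarrow{q}(\bar Y^{(m)}_n\mid\bar Y^{(m)}_{<n})}\,\nabla_\theta\log\overrightarrow{p}_\theta(\bar Y^{(m)}_{\le N})$$ and $\widehat{\nabla}_{\mathrm{MC}}=\frac1M\sum_{m=1}^M\log\frac{p_\theta(Y^{(m)})}{q(Y^{(m)})}\nabla_\theta\log p_\theta(Y^{(m)})$. Then $\lim_{N\to\infty}\widehat{\nabla}_{\mathrm{MC}}^{\le N}=\widehat{\nabla}_{\mathrm{MC}}$.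
   Context: $\Sigma$ is a finite non-empty alphabet, $\mathrm{eos}\notin\Sigma$, $\bar\Sigma=\Sigma\cup\{\mathrm{eos}\}$. A language model $p$ is a distribution over $\Sigma^*$; $\overrightarrow{p}(x)=\sum_{y\in\Sigma^*}p(xy)$, $\overrightarrow{p}(a\mid x)=\overrightarrow{p}(xa)/\overrightarrow{p}(x)$ for $a\in\Sigma$, $\overrightarrow{p}(\mathrm{eos}\mid x)=p(x)/\overrightarrow{p}(x)$. The eos-padded version $\bar Y$ of $Y\in\Sigma^*$ is $Y$ followed by infinitely many eos symbols; for a sequence $x\notin\Sigma^*$, $\overrightarrow{p}(a\mid x)=\mathbb{1}\{a=\mathrm{eos}\}$ (likewise for $q$). For a finite padded prefix, $\overrightarrow{p}(\bar y_{\le n})=\prod_{k=1}^n\overrightarrow{p}(\bar y_k\mid\bar y_{<k})$. Natural logarithm. *)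

(* Defs.v *)
From HB Require Import structures.
From mathcomp Require Import all_boot all_order all_algebra.
From mathcomp Require Import all_classical all_reals all_analysis.
Set Implicit Arguments. Unset Strict Implicit. Unset Printing Implicit Defensive.
Import Order.TTheory GRing.Theory Num.Theory.
Import numFieldNormedType.Exports.
Local Open Scope classical_set_scope.
Local Open Scope ring_scope.

Section LM.
Variables (R : realType) (S : finType).

Definition is_lm (P : seq S -> R) : Prop :=
  (forall y, 0 <= P y) /\ (\esum_(y in [set: seq S]) (P y)%:E = 1%E).

Definition prefp (P : seq S -> R) (x : seq S) : R :=
  fine (\esum_(y in [set: seq S]) (P (x ++ y))%:E).

(* The extended alphabet S ∪ {eos} is  option S,  eos = None. *)
Definition condp (P : seq S -> R) (a : option S) (x : seq (option S)) : R :=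
  if all (fun o => o != None) x then
    let x' := pmap id x in
    match a with
    | Some s => prefp P (rcons x' s) / prefp P x'
    | None => P x' / prefp P x'
    end
  else (a == None)%:R.

(* eos-padded version of y :  ybar y n = \bar y_(n+1)  (0-based index n) *)
Definition ybar (y : seq S) (n : nat) : option S := nth None (map Some y) n.

Definition ypre (y : seq S) (n : nat) : seq (option S) := mkseq (ybar y) n.

Definition prefpad (P : seq S -> R) (y : seq S) (N : nat) : R :=
  \prod_(1 <= k < N.+1) condp P (ybar y k.-1) (ypre y k.-1).

Definition klterm (a b : R) : \bar R :=
  if a == 0 then 0%E else if b == 0 then +oo%E else (a * ln (a / b))%:E.

Definition KL (P Q : seq S -> R) : \bar R :=
  (\esum_(y in [set: seq S]) maxe (klterm (P y) (Q y)) 0%E -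
   \esum_(y in [set: seq S]) maxe (- klterm (P y) (Q y))%E 0%E)%E.

End LM.

Definition grad (R : realType) (d : nat) (f : 'rV[R]_d -> R) (th : 'rV[R]_d)
  : 'rV[R]_d := \row_(i < d) ('D_(delta_mx 0 i) f th).

Definition estN (R : realType) (S : finType) (d M : nat)
  (p : 'rV[R]_d -> seq S -> R) (q : seq S -> R) (th : 'rV[R]_d)
  (Y : 'I_M -> seq S) (N : nat) : 'rV[R]_d :=
  \sum_(1 <= n < N.+1)
    ((M%:R)^-1 *: \sum_(m < M)
       (ln (condp (p th) (ybar (Y m) n.-1) (ypre (Y m) n.-1) /
            condp q (ybar (Y m) n.-1) (ypre (Y m) n.-1))
        *: grad (fun th' => ln (prefpad (p th') (Y m) N)) th)).

Definition estMC (R : realType) (S : finType) (d M : nat)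
  (p : 'rV[R]_d -> seq S -> R) (q : seq S -> R) (th : 'rV[R]_d)
  (Y : 'I_M -> seq S) : 'rV[R]_d :=
  (M%:R)^-1 *: \sum_(m < M)
     (ln (p th (Y m) / q (Y m)) *: grad (fun th' => ln (p th' (Y m))) th).

(* Main.v *)
Require Import Defs.
From HB Require Import structures.
From mathcomp Require Import all_boot all_order all_algebra.
From mathcomp Require Import all_classical all_reals all_analysis.
From mathcomp Require Import ring lra.
Import Order.TTheory GRing.Theory Num.Theory.
Import numFieldNormedType.Exports.
Local Open Scope classical_set_scope.
Local Open Scope ring_scope.
Set Implicit Arguments. Unset Strict Implicit.

Section Aux.
Variables (R : realType) (S : finType).

Lemma esum_subT (T : choiceType) (I : set T) (a : T -> \bar R) :
  (forall x, (0 <= a x)%E) -> (\esum_(i in I) a i <= \esum_(i in [set: T]) a i)%E.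
Proof.
move=> a0; rewrite [X in (X <= _)%E]esum_mkcond; apply: le_esum => i _.
by case: ifP => // _; exact: a0.
Qed.

Lemma esum_ge1 (T : choiceType) (a : T -> \bar R) t :
  (forall x, (0 <= a x)%E) -> (a t <= \esum_(i in [set: T]) a i)%E.
Proof.
move=> a0; rewrite -(@esum_set1 R T t a (a0 t)); exact: esum_subT.
Qed.

Variable P : seq S -> R.
Hypothesis HP : is_lm P.

Let E (x : seq S) : \bar R := (\esum_(y in [set: seq S]) (P (x ++ y))%:E)%E.

Lemma E_cat x z : (E (x ++ z) <= E x)%E.
Proof.
rewrite /E.
have -> : (\esum_(y in [set: seq S]) (P ((x ++ z) ++ y))%:E)%E =
   (\esum_(y in (cat z) @` [set: seq S]) (P (x ++ y))%:E)%E.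
  rewrite (esum_image _ (cat z) (fun y => (P (x ++ y))%:E)); last first.
    by move=> a b _ _ /(congr1 (drop (size z))); rewrite !drop_size_cat.
  by apply: eq_esum => i _; rewrite catA.
apply: esum_subT => y; rewrite lee_fin; exact: HP.1.
Qed.

Lemma E_ge0 x : (0 <= E x)%E.
Proof. apply: esum_ge0 => y _; rewrite lee_fin; exact: HP.1. Qed.


Lemma E_le1 x : (E x <= 1)%E.
Proof. by rewrite -HP.2; have := E_cat [::] x. Qed.

Lemma prefpE x : (prefp P x)%:E = E x.
Proof.
rewrite /prefp fineK // -/(E x) ge0_fin_numE ?E_ge0 //.
exact: (le_lt_trans (E_le1 x) (ltry _)).
Qed.

Lemma prefp_ge0 x : 0 <= prefp P x.
Proof. by rewrite -lee_fin prefpE; exact: E_ge0. Qed.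

Lemma prefp_cat x z : prefp P (x ++ z) <= prefp P x.
Proof. by rewrite -lee_fin !prefpE; exact: E_cat. Qed.

Lemma P_le_prefp x : P x <= prefp P x.
Proof.
rewrite -lee_fin prefpE /E.
have := @esum_ge1 _ (fun y => (P (x ++ y))%:E) [::]; rewrite cats0; apply.
by move=> y; rewrite lee_fin; exact: HP.1.
Qed.

Lemma prefp_nil : prefp P [::] = 1.
Proof. by rewrite /prefp HP.2. Qed.

End Aux.

Section Seq.
Variables (R : realType) (S : finType).
Implicit Types (P : seq S -> R) (Y : seq S).

Lemma ypre_take Y k : (k <= size Y)%N -> ypre Y k = map Some (take k Y).
Proof.
move=> hk; rewrite map_take; apply: (@eq_from_nth _ None).
  by rewrite size_mkseq size_take size_map; case: ltngtP hk.
move=> i; rewrite size_mkseq => hi.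
by rewrite nth_mkseq // nth_take.
Qed.

Lemma all_some (l : seq S) : all (fun o => o != None) (map Some l).
Proof. by elim: l. Qed.

Lemma pmap_some (l : seq S) : pmap id (map Some l) = l.
Proof. by elim: l => //= a l ->. Qed.

Definition ff P Y k := if (k <= size Y)%N then prefp P (take k Y) else P Y.

Lemma c_le P Y k : (k <= size Y)%N ->
  condp P (ybar Y k) (ypre Y k) = ff P Y k.+1 / ff P Y k.
Proof.
move=> hk; rewrite /condp ypre_take // all_some pmap_some /ff hk.
move: hk; rewrite leq_eqVlt => /orP[/eqP heq|hlt]; last first.
  have x0 : S by case: (Y) hlt => [|a].
  have hs := drop_nth x0 hlt.
  have hy : ybar Y k = Some (nth x0 Y k) by rewrite /ybar (nth_map x0).
  rewrite hy ?hlt -cats1 -(addn1 k) takeD hs.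
  by rewrite /= take0.
have hy : ybar Y k = None by rewrite /ybar nth_default // size_map heq.
by rewrite hy heq ltnn take_size.
Qed.

Lemma c_gt P Y k : (size Y < k)%N -> condp P (ybar Y k) (ypre Y k) = 1.
Proof.
move=> hk; have hy : ybar Y k = None by rewrite /ybar nth_default // size_map ltnW.
rewrite /condp hy.
have -> : all (fun o => o != None) (ypre Y k) = false.
  apply/negP => /allP H.
  suff /H : None \in ypre Y k by rewrite eqxx.
  have <- : nth None (ypre Y k) (size Y) = None.
    by rewrite /ypre nth_mkseq // /ybar nth_default // size_map.
  by apply: mem_nth; rewrite size_mkseq.
by rewrite eqxx.
Qed.

Lemma ff0 P : is_lm P -> forall Y, ff P Y 0 = 1.
Proof. by move=> HP Y; rewrite /ff leq0n take0 prefp_nil. Qed.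

Lemma ff_mono P : is_lm P -> forall Y k, (k <= size Y)%N -> 0 <= ff P Y k.+1 <= ff P Y k.
Proof.
move=> HP Y k hk; rewrite /ff hk; move: hk; rewrite leq_eqVlt => /orP[/eqP heq|hlt]; last first.
  rewrite hlt -(addn1 k) takeD prefp_cat // prefp_ge0 //.
rewrite heq ltnn take_size P_le_prefp // andbT; exact: HP.1.
Qed.

Lemma ff_last P Y : ff P Y (size Y).+1 = P Y.
Proof. by rewrite /ff ltnn. Qed.

End Seq.
Arguments ff {R S}.

Section Tele.
Variable R : realType.

Lemma tele_prod (f : nat -> R) n : f 0%N = 1 ->
  (forall k, (k < n)%N -> 0 <= f k.+1 <= f k) ->
  \prod_(0 <= k < n) (f k.+1 / f k) = f n.
Proof.
move=> f0; elim: n => [|n IH] H; first by rewrite big_nil.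
rewrite big_nat_recr //= IH; last by move=> k hk; apply: H; rewrite ltnW.
have /andP[h1 h2] := H n (ltnSn n).
have [fn0|fn0] := eqVneq (f n) 0.
  have fn1 : f n.+1 = 0 by apply/eqP; rewrite eq_le h1 andbT -fn0.
  by rewrite fn0 fn1 mul0r.
by rewrite mulrCA divff // mulr1.
Qed.

Lemma mono_ge (f : nat -> R) n : (forall k, (k < n)%N -> f k.+1 <= f k) ->
  forall k, (k <= n)%N -> f n <= f k.
Proof.
elim: n => [|n IH] H k hk; first by move: hk; rewrite leqn0 => /eqP ->.
move: hk; rewrite leq_eqVlt => /orP[/eqP ->//|hk].
have H' : forall j, (j < n)%N -> f j.+1 <= f j by move=> j hj; apply: H; rewrite ltnW.
exact: le_trans (H n (ltnSn n)) (IH H' k hk).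
Qed.

Lemma tele_ln (f g : nat -> R) n : f 0%N = 1 -> g 0%N = 1 ->
  (forall k, (k <= n)%N -> 0 < f k /\ 0 < g k) ->
  \sum_(0 <= k < n) ln ((f k.+1 / f k) / (g k.+1 / g k)) = ln (f n / g n).
Proof.
move=> f0 g0; elim: n => [|n IH] H.
  by rewrite big_nil f0 g0 divr1 ln1.
rewrite big_nat_recr //= IH; last by move=> k hk; apply: H; rewrite ltnW.
have [fn gn] := H n (leqnSn n); have [fn1 gn1] := H n.+1 (leqnn _).
rewrite -lnM ?posrE ?divr_gt0 //; congr ln.
have fn' := lt0r_neq0 fn; have gn' := lt0r_neq0 gn.
have fn1' := lt0r_neq0 fn1; have gn1' := lt0r_neq0 gn1.
by field; rewrite fn' gn' gn1'.
Qed.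

End Tele.

Section Main.
Variables (R : realType) (S : finType).
Implicit Types (P Q : seq S -> R) (Y : seq S).

Lemma prefpad_eq P Y N : is_lm P -> (size Y < N)%N -> prefpad P Y N = P Y.
Proof.
move=> HP hN; rewrite /prefpad big_add1 /=.
rewrite (big_cat_nat _ (n := (size Y).+1)) //=.
have -> : \prod_((size Y).+1 <= k < N) condp P (ybar Y k) (ypre Y k) = 1.
  rewrite big_nat_cond; apply: big1 => k /andP[/andP[hk _] _]; exact: c_gt.
rewrite mulr1 (eq_big_nat _ _ (F2 := fun k => ff P Y k.+1 / ff P Y k)); last first.
  by move=> k /andP[_ hk]; rewrite c_le.
rewrite tele_prod ?ff_last ?ff0 // => k hk; apply: ff_mono => //.
Qed.

Lemma ff_pos P Y k : is_lm P -> 0 < P Y -> (k <= (size Y).+1)%N -> 0 < ff P Y k.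
Proof.
move=> HP hY hk; apply: lt_le_trans hY _; rewrite -(ff_last P Y).
apply: mono_ge hk => j hj; by case/andP: (ff_mono HP hj).
Qed.

Lemma lnsum_eq P Q Y N : is_lm P -> is_lm Q -> 0 < P Y -> 0 < Q Y -> (size Y < N)%N ->
  \sum_(1 <= n < N.+1) ln (condp P (ybar Y n.-1) (ypre Y n.-1) /
                          condp Q (ybar Y n.-1) (ypre Y n.-1)) = ln (P Y / Q Y).
Proof.
move=> HP HQ hP hQ hN; rewrite big_add1 /=.
rewrite (big_cat_nat _ (n := (size Y).+1)) //=.
have -> : \sum_((size Y).+1 <= k < N) ln (condp P (ybar Y k) (ypre Y k) /
                          condp Q (ybar Y k) (ypre Y k)) = 0.
  rewrite big_nat_cond; apply: big1 => k /andP[/andP[hk _] _].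
  by rewrite !c_gt // divr1 ln1.
rewrite addr0 (eq_big_nat _ _
   (F2 := fun k => ln ((ff P Y k.+1 / ff P Y k) / (ff Q Y k.+1 / ff Q Y k)))); last first.
  by move=> k /andP[_ hk]; rewrite !c_le.
rewrite tele_ln ?ff_last ?ff0 // => k hk; split; exact: ff_pos.
Qed.

Lemma kl_neg_le (a b : R) : 0 <= a -> 0 <= b ->
  (maxe (- klterm a b) 0 <= b%:E)%E.
Proof.
move=> a0 b0; rewrite /klterm; case: ifP => [_|/negbT an0].
  by rewrite oppe0 ge_max lee_fin b0.
case: ifP => [/eqP ->|/negbT bn0].
  by rewrite ge_max leNye lee_fin lexx.
have ap : 0 < a by rewrite lt0r an0.
have bp : 0 < b by rewrite lt0r bn0.
rewrite ge_max [X in _ && X]lee_fin b0 andbT -EFinN lee_fin.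
have -> : - (a * ln (a / b)) = a * ln (b / a).
  by rewrite -mulrN -lnV ?posrE ?divr_gt0 // invf_div.
have h : ln (b / a) <= b / a - 1.
  have h1 := @le_ln1Dx R (b / a - 1).
  rewrite (_ : 1 + (b / a - 1) = b / a) in h1; last by rewrite addrC subrK.
  apply: h1; have := divr_gt0 bp ap; set t := b / a; lra.
apply: le_trans (ler_wpM2l a0 h) _.
rewrite mulrBr mulr1 mulrCA divff // mulr1; lra.
Qed.

Lemma kl_pos P Q y : is_lm P -> is_lm Q -> (KL P Q < +oo)%E -> 0 < P y -> 0 < Q y.
Proof.
move=> HP HQ hKL hy; rewrite lt0r HQ.1 andbT; apply/negP => /eqP hq.
move: hKL; rewrite /KL.
have -> : (\esum_(y in [set: seq S]) maxe (klterm (P y) (Q y)) 0 = +oo)%E.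
  apply/eqP; rewrite -leye_eq.
  have <- : (maxe (klterm (P y) (Q y)) 0 = +oo)%E.
    by rewrite /klterm hq eqxx (negbTE (lt0r_neq0 hy)) /maxe /=.
  apply: esum_ge1 => x; by rewrite le_max lexx orbT.
have hfin : (\esum_(y in [set: seq S]) maxe (- klterm (P y) (Q y)) 0)%E \is a fin_num.
  rewrite ge0_fin_numE; last by apply: esum_ge0 => x _; rewrite le_max lexx orbT.
  apply: le_lt_trans (ltry 1); rewrite -HQ.2; apply: le_esum => x _.
  apply: kl_neg_le; [exact: HP.1 | exact: HQ.1].
rewrite addye ?ltxx //.
by move: hfin; rewrite -fin_numN fin_numE => /andP[].
Qed.

End Main.

Unset Implicit Arguments.

Theorem lemma3 (R : realType) (S : finType) (d M : nat)
  (p : 'rV[R]_d -> seq S -> R) (q : seq S -> R) (th : 'rV[R]_d)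
  (Y : 'I_M -> seq S) :
  (0 < #|S|)%N ->
  (forall th', is_lm (p th')) ->
  (forall th' y, differentiable (fun t => p t y) th') ->
  is_lm q ->
  (KL (p th) q < +oo)%E ->
  (forall m, 0 < p th (Y m)) ->
  estN p q th Y N @[N --> \oo] --> estMC p q th Y.
Proof.
move=> _ HP _ HQ HKL Hpos.
have Hq m : 0 < q (Y m) by apply: (kl_pos (HP th) HQ HKL (Hpos m)).
apply: cvg_near_cst; exists (\max_(m < M) size (Y m)).+1 => // N /= hN.
have hsz m : (size (Y m) < N)%N.
  by apply: leq_ltn_trans hN; exact: (leq_bigmax m).
rewrite /estN /estMC.
have G m : grad (fun th' => ln (prefpad (p th') (Y m) N)) th =
           grad (fun th' => ln (p th' (Y m))) th.
  by congr grad; apply: funext => th'; rewrite prefpad_eq.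
under eq_bigr do under eq_bigr do rewrite G.
rewrite -scaler_sumr exchange_big /=; congr (_ *: _).
apply: eq_bigr => m _; rewrite -scaler_suml lnsum_eq //.
Qed.
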